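(* In the setting below, suppose that either (1) $\mathbb{P}(X=x)>0$, or (2) there exists $r>0$ such that $\mathbb{E}[\mathbb{I}_{\bar B_r}(X)\,|\eta(X)-\eta(x)|]=0$. Then $\mathbb{E}\big[|\eta(X^x_m)-\eta(x)|\big]\to 0$ as $m\to\infty$.
   Context: Let $(\mathcal{X},d)$ be a metric space with its Borel $\sigma$-algebra, let $(\Omega,\mathcal{F},\mathbb{P})$ be a probability space, and let $X,X_1,X_2,\dots$ be i.i.d. $\mathcal{X}$-valued random variables with common law $\mathbb{P}_X$. For $x\in\mathcal{X}$ and $r>0$ write $B_r=\{x':d(x,x')<r\}$, $\bar B_r=\{x':d(x,x')\le r\}$ and $S_r=\{x':d(x,x')=r\}$. The support of $\mathbb{P}_X$ is the set of $x$ such that $\mathbb{P}_X(\bar B_r(x))>0$ for all $r>0$. Fix $x$ in the support of $\mathbb{P}_X$ and a bounded measurable $\eta:\mathcal{X}\to\mathbb{R}$. For each $m\in\mathbb{N}$, a nearest neighbor of $x$ among $X_1,\dots,X_m$ is a measurable $X^x_m:\Omega\to\mathcal{X}$ with $X^x_m(\omega)\in\arg\min_{x'\in\{X_1(\omega),\dots,X_m(\omega)\}}d(x,x')$ for every $\omega\in\Omega$; fix such a sequence $(X^x_m)_{m\in\mathbb{N}}$. *)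

(* Defs.v *)
From HB Require Import structures.
From mathcomp Require Import all_boot all_order all_algebra.
From mathcomp Require Import all_classical all_reals all_analysis.
Set Implicit Arguments. Unset Strict Implicit. Unset Printing Implicit Defensive.
Import Order.TTheory GRing.Theory Num.Theory.
Local Open Scope classical_set_scope.
Local Open Scope ring_scope.

Definition is_metric {R : realType} {T : Type} (dist : T -> T -> R) : Prop :=
  (forall x y, 0 <= dist x y) /\
  (forall x y, dist x y = 0 <-> x = y) /\
  (forall x y, dist x y = dist y x) /\
  (forall x y z, dist x z <= dist x y + dist y z).

Definition oball {R : realType} {T : Type} (dist : T -> T -> R) (x : T) (r : R)
  : set T := [set y | dist x y < r].
Definition cball {R : realType} {T : Type} (dist : T -> T -> R) (x : T) (r : R)
  : set T := [set y | dist x y <= r].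

Definition metric_open {R : realType} {T : Type} (dist : T -> T -> R) : set (set T) :=
  [set A | forall x, A x -> exists2 r : R, 0 < r & oball dist x r `<=` A].

Definition is_borel_of {R : realType} {d : measure_display} {T : measurableType d}
  (dist : T -> T -> R) : Prop :=
  @measurable d T = <<s metric_open dist >>.

Definition mutually_independent {R : realType} {dO : measure_display}
  {Omega : measurableType dO} (P : probability Omega R)
  {d : measure_display} {T : measurableType d} {I : eqType} (Y : I -> Omega -> T)
  : Prop :=
  forall (J : seq I), uniq J ->
  forall (A : I -> set T), (forall i, measurable (A i)) ->
    P (\bigcap_(i in [set` J]) (Y i @^-1` A i)) = (\prod_(i <- J) P (Y i @^-1` A i))%E.

Definition in_support {R : realType} {dO : measure_display}
  {Omega : measurableType dO} (P : probability Omega R)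
  {d : measure_display} {T : measurableType d} (dist : T -> T -> R)
  (Y : Omega -> T) (x : T) : Prop :=
  forall r : R, 0 < r -> (0 < P (Y @^-1` cball dist x r))%E.

Definition is_nearest_neighbor {R : realType} {Omega T : Type}
  (dist : T -> T -> R) (x : T) (Y : nat -> Omega -> T) (m : nat) (Z : Omega -> T)
  : Prop :=
  forall w, (exists2 i, (i < m)%N & Z w = Y i w) /\
            (forall i, (i < m)%N -> dist x (Z w) <= dist x (Y i w)).

(* Main.v *)
Require Import Defs.
From HB Require Import structures.
From mathcomp Require Import all_boot all_order all_algebra.
From mathcomp Require Import all_classical all_reals all_analysis.
Import Order.TTheory GRing.Theory Num.Theory.
Local Open Scope classical_set_scope.
Local Open Scope ring_scope.

Lemma cvg_aux0 (R : realType) : (@cst nat R 0) @ \oo --> 0.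
Proof. exact: (cvg_cst (0:R^o)). Qed.

Lemma cvg_aux (R : realType) (c q : R) : 0 < q -> q <= 1 ->
  (fun m : nat => c * (1 - q) ^+ m) @ \oo --> 0.
Proof.
move=> q0 q1.
rewrite -(mulr0 c); apply: cvgM; first exact: (cvg_cst (c:R^o)).
apply: cvg_expr; by rewrite ger0_norm ?subr_ge0 // gtrBl.
Qed.

From mathcomp Require Import lra measurable_realfun.

Lemma prod_const_iota (R : realType) (c : R) m : forall n,
  (\prod_(i <- iota n m) c%:E)%E = (c ^+ m)%:E.
Proof.
elim: m => [|m IH] n; first by rewrite big_nil expr0.
by rewrite /= big_cons IH exprS EFinM.
Qed.

Lemma cball_measurable (R : realType)
  (d : measure_display) (T : measurableType d) (dist : T -> T -> R)
  (dist_metric : is_metric dist) (T_borel : is_borel_of dist) x r :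
  measurable (cball dist x r).
Proof.
case: dist_metric => d0 [deq [dsym dtri]].
have openM : forall A, metric_open dist A -> measurable A.
  by move=> A oA; rewrite T_borel; exact: sub_sigma_algebra.
rewrite -(setCK (cball dist x r)); apply: measurableC; apply: openM.
move=> y /= ny; exists (dist x y - r).
  by rewrite subr_gt0 ltNge; apply/negP.
move=> z; rewrite /oball /cball /= => hz hxz.
have := dtri x z y; rewrite (dsym z y); lra.
Qed.

Lemma key (R : realType)
  (d : measure_display) (T : measurableType d) (dist : T -> T -> R)
  (dist_metric : is_metric dist) (T_borel : is_borel_of dist)
  (dO : measure_display) (Omega : measurableType dO) (P : probability Omega R)
  (X : Omega -> T) (Xs : nat -> Omega -> T)
  (mX : measurable_fun setT X) (mXs : forall i, measurable_fun setT (Xs i))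
  (indep : mutually_independent P
     (fun o : option nat => match o with None => X | Some i => Xs i end))
  (ident : forall i (A : set T), measurable A ->
     P (Xs i @^-1` A) = P (X @^-1` A))
  (x : T)
  (eta : T -> R) (meta : measurable_fun setT eta)
  (eta_bdd : exists M : R, forall y, `|eta y| <= M)
  (NN : nat -> Omega -> T)
  (mNN : forall m, (0 < m)%N -> measurable_fun setT (NN m))
  (NN_nn : forall m, (0 < m)%N -> is_nearest_neighbor dist x Xs m (NN m))
  (r : R)
  (qpos : (0 < P (X @^-1` cball dist x r))%E)
  (Bnull : P (X @^-1` (cball dist x r `&` eta @^-1` (~` [set eta x]))) = 0%E) :
  (fun m => \int[P]_w (`|eta (NN m w) - eta x|)%:E)%E @ \oo --> 0%E.
Proof.
have mC := @cball_measurable _ _ _ dist dist_metric T_borel x r.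
set C := cball dist x r in qpos Bnull mC.
set B := C `&` eta @^-1` (~` [set eta x]) in Bnull.
have mB : measurable B.
  apply: measurableI => //.
  by have := meta measurableT _ (measurableC (measurable_set1 (eta x))); rewrite setTI.
have mpre : forall (f : Omega -> T) A, measurable_fun setT f -> measurable A ->
    measurable (f @^-1` A).
  by move=> f A mf mA; have := mf measurableT _ mA; rewrite setTI.
case: eta_bdd => M HM.
have M0 : 0 <= M by apply: le_trans (HM x).
pose U := \bigcup_i (Xs i @^-1` B).
have mU : measurable U by apply: bigcupT_measurable => i; exact: mpre.
have PU : P U = 0%E.
  apply/(negligibleP _ mU); apply: negligible_bigcup => i.
  apply/(negligibleP _ (mpre _ _ (mXs i) mB)); exact: (etrans (ident i B mB) Bnull).
pose D m := \bigcap_(i in [set k | (k < m)%N]) (Xs i @^-1` ~` C).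
have mD : forall m, measurable (D m).
  by move=> m; apply: bigcap_measurableType => i _; apply: mpre => //; exact: measurableC.
pose q := fine (P (X @^-1` C)).
have PXC : P (X @^-1` C) = q%:E.
  by rewrite fineK // fin_num_measure //; exact: (mpre _ _ mX mC).
have q0 : 0 < q by rewrite -lte_fin -PXC.
have q1 : q <= 1 by rewrite -lee_fin -PXC probability_le1 //; exact: (mpre _ _ mX mC).
have PD : forall m, P (D m) = ((1 - q) ^+ m)%:E.
  move=> m.
  have -> : D m = \bigcap_(i in [set` map Some (iota 0 m)])
      ((fun o : option nat => match o with None => X | Some i => Xs i end) i
        @^-1` ~` C).
    apply/seteqP; split => w /= Hw.
      move=> o Ho; case/mapP: Ho => j; rewrite mem_iota => /andP[_ jm] ->.
      by apply: Hw; rewrite /= add0n in jm.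
    move=> i im; apply: (Hw (Some i)) => /=; apply/mapP; exists i => //.
    by rewrite mem_iota add0n.
  rewrite indep; last 2 first.
  - by rewrite map_inj_uniq ?iota_uniq // => a b [].
  - by move=> o; apply: measurableC.
  rewrite big_map.
  have PXs : forall i, P (Xs i @^-1` ~` C) = (1 - q)%:E.
    move=> i; rewrite (ident i (~` C)); last exact: measurableC.
    by rewrite preimage_setC probability_setC ?PXC //; exact: (mpre _ _ mX mC).
  rewrite (eq_bigr (fun _ => (1 - q)%:E)); first exact: prod_const_iota.
  by move=> i _; exact: PXs.
have bound : forall m, (0 < m)%N -> forall w,
    `|eta (NN m w) - eta x| <= (2 * M) * \1_(D m `|` U) w.
  move=> m m0 w.
  case: (NN_nn m m0 w) => [[j jm NNj] Hmin].
  have [DUw|nDUw] := pselect ((D m `|` U) w).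
    rewrite indicE mem_set // mulr1.
    have := HM (NN m w); have := HM x; have := ler_normB (eta (NN m w)) (eta x).
    lra.
  rewrite indicE memNset // mulr0.
  have nD : ~ D m w by move=> H; apply: nDUw; left.
  have nU : ~ U w by move=> H; apply: nDUw; right.
  have [i im Ci] : exists2 i, (i < m)%N & C (Xs i w).
    apply: contra_notP nD => H i im Ci; apply: H; by exists i.
  have CNN : C (NN m w) by apply: le_trans (Hmin i im) Ci.
  have [e|ne] := eqVneq (eta (NN m w)) (eta x).
    by rewrite e subrr normr0.
  exfalso; apply: nU; exists j => //; rewrite /= -NNj; split => //.
  by move=> h; rewrite h eqxx in ne.
have Ibound : forall m, (0 < m)%N ->
  (0 <= \int[P]_w (`|eta (NN m w) - eta x|)%:E <= (2 * M * (1 - q) ^+ m)%:E)%E.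
  move=> m m0; apply/andP; split; first by apply: integral_ge0 => w _; rewrite lee_fin.
  apply: (@le_trans _ _ (\int[P]_w ((2 * M) * \1_(D m `|` U) w)%:E)%E).
    apply: ge0_le_integral => //.
    - apply/measurable_EFinP; apply: measurableT_comp => //.
      apply: measurable_funB => //; apply: measurableT_comp => //; exact: mNN.
    - apply/measurable_EFinP; apply: measurable_funM => //.
      by apply: measurable_indic; apply: measurableU.
    - by move=> w _; rewrite lee_fin bound.
  rewrite (@integralZl_indic _ _ _ P setT measurableT (fun _ => D m `|` U)) //; last 2 first.
  - move=> h; exfalso; move: h; apply/negP; rewrite -leNgt; exact: mulr_ge0.
  - exact: measurableU.
  rewrite integral_indic //; last exact: measurableU.
  rewrite setIT (_ : (2 * M * (1 - q) ^+ m)%:E = (2 * M)%:E * ((1 - q) ^+ m)%:E)%E; last by rewrite EFinM.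
  apply: lee_wpmul2l; first by rewrite lee_fin mulr_ge0.
  apply: le_trans (measureU2 _ (mD m) mU) _.
  rewrite le_eqVlt; apply/orP; left; apply/eqP; rewrite -[X in _ = X]adde0; congr (_ + _)%E; [exact: PD | exact: PU].
apply/fine_cvgP; split.
  near=> m.
  have m0 : (0 < m)%N by near: m; exists 1%N.
  have /andP[h1 h2] := Ibound m m0.
  by rewrite ge0_fin_numE // (le_lt_trans h2) // ltey.
have H1 := cvg_aux0 R.
have H2 := @cvg_aux R (2 * M) q q0 q1.
apply: (squeeze_cvgr _ H1 H2).
near=> m.
have m0 : (0 < m)%N by near: m; exists 1%N.
have /andP[h1 h2] := Ibound m m0.
have fI : (\int[P]_w (`|eta (NN m w) - eta x|)%:E)%E \is a fin_num.
  by rewrite ge0_fin_numE // (le_lt_trans h2) // ltey.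
by rewrite /= -!lee_fin fineK // h1 h2.
Unshelve. all: by end_near.
Qed.


Theorem mainTheorem2 (R : realType)
  (d : measure_display) (T : measurableType d) (dist : T -> T -> R)
  (dist_metric : is_metric dist) (T_borel : is_borel_of dist)
  (dO : measure_display) (Omega : measurableType dO) (P : probability Omega R)
  (X : Omega -> T) (Xs : nat -> Omega -> T)
  (mX : measurable_fun setT X) (mXs : forall i, measurable_fun setT (Xs i))
  (indep : mutually_independent P
     (fun o : option nat => match o with None => X | Some i => Xs i end))
  (ident : forall i (A : set T), measurable A ->
     P (Xs i @^-1` A) = P (X @^-1` A))
  (x : T) (x_supp : in_support P dist X x)
  (eta : T -> R) (meta : measurable_fun setT eta)
  (eta_bdd : exists M : R, forall y, `|eta y| <= M)
  (NN : nat -> Omega -> T)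
  (mNN : forall m, (0 < m)%N -> measurable_fun setT (NN m))
  (NN_nn : forall m, (0 < m)%N -> is_nearest_neighbor dist x Xs m (NN m))
  (hyp : (0 < P (X @^-1` [set x]))%E \/
         exists2 r : R, 0 < r &
           (\int[P]_w ((\1_(cball dist x r) (X w) : R) * `|eta (X w) - eta x|)%:E
              = 0)%E) :
  (fun m => \int[P]_w (`|eta (NN m w) - eta x|)%:E)%E @ \oo --> 0%E.
Proof.
have mC := @cball_measurable _ _ _ dist dist_metric T_borel x.
have mpre : forall (f : Omega -> T) A, measurable_fun setT f -> measurable A ->
    measurable (f @^-1` A).
  by move=> f A mf mA; have := mf measurableT _ mA; rewrite setTI.
case: hyp => [Hx|[r r0 Hint]].
- have c0 : cball dist x 0 = [set x].
    case: dist_metric => d0 [deq _].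
    apply/seteqP; split => y /=.
      rewrite /cball /= => h.
      have : dist x y = 0 by apply/le_anti; rewrite h d0.
      by move/deq => ->.
    by move=> ->; rewrite /cball /= ((deq x x).2 erefl).
  apply: (@key R d T dist dist_metric T_borel dO Omega P X Xs mX mXs indep ident
     x eta meta eta_bdd NN mNN NN_nn 0).
    by rewrite c0.
  rewrite (_ : _ @^-1` _ = set0) ?measure0 //.
  apply/seteqP; split => w //= [h1 h2]; apply: h2; move: h1; rewrite c0 /= => ->.
  by [].
- apply: (@key R d T dist dist_metric T_borel dO Omega P X Xs mX mXs indep ident
     x eta meta eta_bdd NN mNN NN_nn r); first exact: x_supp.
  pose g w := (\1_(cball dist x r) (X w) : R) * `|eta (X w) - eta x|.
  have g0 : forall w, 0 <= g w by move=> w; rewrite /g mulr_ge0.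
  have mg : measurable_fun setT (fun w => (g w)%:E).
    apply/measurable_EFinP; apply: measurable_funM.
      by apply: measurableT_comp => //; exact: measurable_indic.
    apply: measurableT_comp => //; apply: measurable_funB => //.
    exact: measurableT_comp.
  have : ae_eq P setT (fun w => (g w)%:E) (cst 0%E).
    apply/(ae_eq_integral_abs P measurableT mg).
    rewrite -Hint; apply: eq_integral => w _.
    by rewrite gee0_abs // lee_fin.
  move=> [N [mN PN sub]].
  apply: (subset_measure0 _ mN) => //.
    apply: mpre => //; apply: measurableI => //.
    by have := meta measurableT _ (measurableC (measurable_set1 (eta x))); rewrite setTI.
  move=> w /= [h1 h2]; apply: sub => /= H.
  have := H I; rewrite /g indicE mem_set // mul1r => /eqP.
  rewrite eqe normr_eq0 subr_eq0 => /eqP h; exact: h2.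
Qed.
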